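(* For every $\eta > 0$, every directed graph $\Gamma$ on $n$ vertices with minimum indegree $\delta^-(\Gamma) \geq \eta n$ admits a perfect $(\eta, 1 - \eta)$-weighted fractional matching. Furthermore, if $\eta = p/q$ for positive integers $p$ and $q$, then the weights of such a matching can be taken to be rational numbers with a common denominator bounded above by some function of $p$, $q$ and $n$.
   Context: Let $\Gamma$ be a directed graph on $n$ vertices and $\eta, \xi > 0$. An $(\eta,\xi)$-weighted fractional matching in $\Gamma$ is an assignment of a weight $w_{\vec{uv}} \ge 0$ to each directed edge $\vec{uv}$ of $\Gamma$ such that for every vertex $u$, $\sum_{v \in N^+_\Gamma(u)} \eta w_{\vec{uv}} + \sum_{v \in N^-_\Gamma(u)} \xi w_{\vec{vu}} \le 1$. Its total weight is $W := \sum_{\vec{uv} \in E(\Gamma)} (\eta+\xi) w_{\vec{uv}}$ (so $W \le n$), and it is perfect if $W = n$ (equivalently, equality holds at every vertex). *)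

(* Defs.v *)
From mathcomp Require Import all_boot all_order all_algebra.
From mathcomp Require Import reals.
Set Implicit Arguments. Unset Strict Implicit. Unset Printing Implicit Defensive.
Import Order.TTheory GRing.Theory Num.Theory.
Local Open Scope ring_scope.

(* A directed graph on the finite vertex type V is an edge relation
   e : rel V (e u v means the directed edge u -> v); it is a simple
   digraph: no loops (irreflexive), at most one edge u -> v for each
   ordered pair (antiparallel pairs allowed). *)

Definition indeg (V : finType) (e : rel V) (u : V) : nat := #|[set v | e v u]|.

(* (eta, xi)-weighted fractional matching: w u v is the weight of edge u->v
   (values of w on non-edges are irrelevant). *)
Definition weighted_fractional_matching (R : realFieldType) (V : finType)
    (e : rel V) (eta xi : R) (w : V -> V -> R) : Prop :=
  (forall u v, e u v -> 0 <= w u v) /\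
  (forall u : V,
     \sum_(v | e u v) eta * w u v + \sum_(v | e v u) xi * w v u <= 1).

Definition total_weight (R : realFieldType) (V : finType)
    (e : rel V) (eta xi : R) (w : V -> V -> R) : R :=
  \sum_(u : V) \sum_(v | e u v) (eta + xi) * w u v.

Definition perfect_weighted_fractional_matching (R : realFieldType)
    (V : finType) (e : rel V) (eta xi : R) (w : V -> V -> R) : Prop :=
  weighted_fractional_matching e eta xi w /\
  total_weight e eta xi w = (#|V|)%:R.

(* Main.v *)
Require Import Defs.
From mathcomp Require Import all_boot all_order all_algebra.
From mathcomp Require Import reals.
From mathcomp Require Import ring lra.
From Stdlib Require Import ClassicalEpsilon.
Set Implicit Arguments. Unset Strict Implicit. Unset Printing Implicit Defensive.
Import Order.TTheory GRing.Theory Num.Theory.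
Local Open Scope ring_scope.

Section Farkas.
Variables (R : realFieldType) (I : finType) (J : eqType).

Definition dot (y a : I -> R) := \sum_i y i * a i.

Lemma dot_linr (y u v : I -> R) (a c : R) :
  dot y (fun x => a * u x - c * v x) = a * dot y u - c * dot y v.
Proof.
rewrite /dot !mulr_sumr -sumrB; apply: eq_bigr => i _; ring.
Qed.

Lemma dot_linl (y u v : I -> R) (a c : R) :
  dot (fun x => a * u x - c * v x) y = a * dot u y - c * dot v y.
Proof.
rewrite /dot !mulr_sumr -sumrB; apply: eq_bigr => i _; ring.
Qed.

Lemma farkas (s : seq J) : uniq s -> forall (col : J -> I -> R) (b : I -> R),
 (exists lam : J -> R, (forall j, 0 <= lam j) /\
     forall x, b x = \sum_(j <- s) lam j * col j x)
 \/ (exists y, (forall j, j \in s -> 0 <= dot y (col j)) /\ dot y b < 0).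
Proof.
elim: s => [|j s IH] /= Hu col b.
  case: (boolP [forall x, b x == 0]) => [/forallP H|/forallPn [x0 Hx0]].
    left; exists (fun _ => 0); split => // x; by rewrite big_nil (eqP (H x)).
  right; exists (fun x => - b x); split => //.
  rewrite /dot (bigD1 x0) //=.
  have h1 : \sum_(i | i != x0) - b i * b i <= 0.
    rewrite -oppr_ge0 -sumrN; apply: sumr_ge0 => i _.
    by rewrite mulNr opprK -expr2 sqr_ge0.
  have h2 : 0 < b x0 * b x0.
    by rewrite -expr2 exprn_even_gt0 // ?(negbTE Hx0).
  rewrite mulNr; lra.
case/andP: Hu => Hj Hu.
case: (IH Hu col b) => [[lam [Hl Hb]]|[y [Hy Hyb]]].
  left; exists (fun k => if k == j then 0 else lam k); split.
    by move=> k; case: ifP.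
  move=> x; rewrite big_cons eqxx mul0r add0r Hb.
  apply: eq_big_seq => k Hk; case: eqP => // ek.
  by move: Hj; rewrite -ek Hk.
set ya := dot y (col j).
case: (leP 0 ya) => hya.
  right; exists y; split => // k; rewrite inE; case/orP => [/eqP ->//|]; exact: Hy.
pose col2 k := fun x => ya * col k x - dot y (col k) * col j x.
pose b2 := fun x => ya * b x - dot y b * col j x.
case: (IH Hu col2 b2) => [[lam [Hl Hb]]|[y' [Hy' Hyb']]].
  pose num := dot y b - \sum_(k <- s) lam k * dot y (col k).
  have hS : 0 <= \sum_(k <- s) lam k * dot y (col k).
    rewrite big_seq_cond; apply: sumr_ge0 => k /andP [Hk _].
    by apply: mulr_ge0 => //; apply: Hy.
  have hnum : num < 0 by rewrite /num; lra.
  have ya0 : ya != 0 by rewrite lt_eqF.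
  pose mu := num / ya.
  left; exists (fun k => if k == j then mu else lam k); split.
    move=> k; case: ifP => // _; rewrite /mu.
    apply: mulr_le0; first exact: ltW.
    by rewrite invr_le0 ltW.
  move=> x; rewrite big_cons eqxx.
  have -> : \sum_(k <- s) (if k == j then mu else lam k) * col k x =
            \sum_(k <- s) lam k * col k x.
    apply: eq_big_seq => k Hk; case: eqP => // ek.
    by move: Hj; rewrite -ek Hk.
  have := Hb x; rewrite /b2 /col2.
  have -> : \sum_(j0 <- s) lam j0 * (ya * col j0 x - dot y (col j0) * col j x)
     = ya * \sum_(k <- s) lam k * col k x
       - (\sum_(k <- s) lam k * dot y (col k)) * col j x.
    rewrite mulr_sumr mulr_suml -sumrB; apply: eq_bigr => k _; ring.
  move=> E; apply: (mulfI ya0).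
  have hm : ya * mu = num by rewrite /mu mulrC divfK.
  rewrite mulrDr mulrA hm /num; move: E; lra.
right; exists (fun x => ya * y' x - dot y' (col j) * y x); split.
  move=> k; rewrite inE dot_linl; case/orP => [/eqP ->|Hk].
    by rewrite /ya mulrC subrr.
  have := Hy' k Hk; rewrite /col2 dot_linr; lra.
by move: Hyb'; rewrite dot_linl /b2 dot_linr; lra.
Qed.
End Farkas.

Section Main.
Variables (R : realFieldType) (V : finType).

Lemma sum_indr (y : V -> R) a : \sum_x y x * (x == a)%:R = y a.
Proof.
rewrite (bigD1 a) //= eqxx mulr1 big1 ?addr0 // => x /negbTE ->; by rewrite mulr0.
Qed.

Lemma sum_ind (a : V) : \sum_x ((x == a)%:R : R) = 1.
Proof.
rewrite (bigD1 a) //= eqxx big1 ?addr0 // => x /negbTE ->; by [].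
Qed.

Lemma sum_tail (e : rel V) (G : V -> V -> R) x :
  \sum_u \sum_(v | e u v) G u v * (x == u)%:R = \sum_(v | e x v) G x v.
Proof.
rewrite (bigD1 x) //=.
rewrite [X in _ + X]big1 ?addr0.
  by apply: eq_bigr => v _; rewrite eqxx mulr1.
move=> u /negbTE; rewrite eq_sym => ->; apply: big1 => v _; by rewrite mulr0.
Qed.

Lemma sum_head (e : rel V) (G : V -> V -> R) x :
  \sum_u \sum_(v | e u v) G u v * (x == v)%:R = \sum_(u | e u x) G u x.
Proof.
rewrite [RHS]big_mkcond; apply: eq_bigr => u _.
rewrite big_mkcond (bigD1 x) //= eqxx mulr1 [X in _ + X]big1 ?addr0.
  by case: (e u x).
move=> v /negbTE; rewrite eq_sym => ->; case: (e u v); by rewrite ?mulr0.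
Qed.

Lemma main (e : rel V) (eta : R) : 0 < eta ->
  (forall u : V, eta * (#|V|)%:R <= (indeg e u)%:R) ->
  exists w : V -> V -> R, perfect_weighted_fractional_matching e eta (1 - eta) w.
Proof.
move=> eta0 Hdeg.
pose s := enum [pred p : V * V | e p.1 p.2].
pose col (p : V * V) := fun x : V => eta * (x == p.1)%:R + (1 - eta) * (x == p.2)%:R.
have Hs : uniq s by apply: enum_uniq.
have expand : forall (lam : V * V -> R) x,
   \sum_(p <- s) lam p * col p x =
   \sum_(v | e x v) eta * lam (x, v) + \sum_(v | e v x) (1 - eta) * lam (v, x).
  move=> lam x; rewrite big_enum /=.
  transitivity (\sum_u \sum_(v | e u v) lam (u,v) * col (u,v) x).
    rewrite pair_big_dep /=; apply: eq_big => [[u v]|[u v] _] //.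
  rewrite (eq_bigr (fun u => \sum_(v | e u v) eta * lam (u,v) * (x == u)%:R
      + \sum_(v | e u v) (1 - eta) * lam (u,v) * (x == v)%:R)); last first.
    move=> u _; rewrite -big_split; apply: eq_bigr => v _ /=; rewrite /col /=; ring.
  rewrite big_split /= (sum_tail e (fun u v => eta * lam (u, v))).
  by rewrite (sum_head e (fun u v => (1 - eta) * lam (u, v))).
case: (farkas Hs col (fun _ => 1)) => [[lam [Hl Hb]]|[y [Hy Hyb]]].
  exists (fun u v => lam (u, v)); split; first split.
  - by move=> u v _.
  - by move=> u; rewrite -expand -Hb.
  rewrite /total_weight.
  have -> : #|V|%:R = \sum_(x : V) (1 : R).
    by rewrite sumr_const.
  under [RHS]eq_bigr => x _ do rewrite (Hb x).
  rewrite exchange_big /= /s big_enum /=.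
  rewrite pair_big_dep /=; apply: eq_big => [[u v]|[u v] _] //=.
  rewrite -mulr_sumr /col.
  rewrite big_split /= -!mulr_sumr !sum_ind; ring.
exfalso.
have dotc : forall u v, dot y (col (u, v)) = eta * y u + (1 - eta) * y v.
  move=> u v; rewrite /dot /col.
  under eq_bigr => x _ do rewrite mulrDr mulrCA [y x * _]mulrCA.
  by rewrite big_split /= -!mulr_sumr !sum_indr.
have Hyb' : \sum_x y x < 0.
  by move: Hyb; rewrite /dot; under eq_bigr => x _ do rewrite mulr1.
have [i0 _] : exists i0 : V, true.
  case: (pickP (@predT V)) => [x _|H]; first by exists x.
  by move: Hyb'; rewrite big_pred0 // ltxx.
case: (@arg_minP _ _ V i0 predT y isT) => v _ Hmin.
set m := y v in Hmin.
have Hmin' : forall x, m <= y x by move=> x; apply: Hmin.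
case: (leP 0 m) => hm.
  have : 0 <= \sum_x y x by apply: sumr_ge0 => x _; exact: le_trans (Hmin' x).
  lra.
have hd := Hdeg v.
have hin : forall u, e u v -> - (1 - eta) * m <= eta * y u.
  move=> u euv; have := Hy (u, v); rewrite mem_enum /= dotc => H.
  have := H euv; rewrite /m; lra.
pose d := (indeg e v)%:R : R.
pose d' := (#|V|%:R : R) - d.
have Hd : \sum_(x | e x v) (1 : R) = d.
  rewrite /d /indeg -sumr_const; apply: eq_bigl => x; by rewrite inE.
have Hn : \sum_(x : V) (1 : R) = #|V|%:R by rewrite sumr_const.
have Hd' : \sum_(x | ~~ e x v) (1 : R) = d'.
  by rewrite /d' -Hn [in RHS](bigID (fun x => e x v)) /= Hd addrC addrK.
have S1 : - (1 - eta) * m * d <= eta * \sum_(x | e x v) y x.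
  rewrite -Hd mulr_sumr mulr_sumr; apply: ler_sum => x exv; rewrite mulr1.
  exact: hin.
have S2 : m * d' <= \sum_(x | ~~ e x v) y x.
  rewrite -Hd' mulr_sumr; apply: ler_sum => x _; by rewrite mulr1.
have := (bigID (fun x => e x v) predT y); rewrite /= => Hsplit.
have hdd : eta * #|V|%:R <= d by [].
have key : 0 <= m * (d - eta * #|V|%:R) * - 1 by nra.
have : 0 <= eta * \sum_x y x.
  rewrite Hsplit mulrDr.
  have E : - (1 - eta) * m * d + eta * (m * d') = - (m * (d - eta * #|V|%:R)).
    rewrite /d'; ring.
  nra.
move=> H; have : eta * \sum_x y x < 0 by rewrite pmulr_rlt0.
lra.
Qed.
End Main.

Lemma ratr_pq (R : realFieldType) (p q : nat) :
  ratr (p%:R / q%:R) = (p%:R / q%:R : R).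
Proof. by rewrite fmorph_div /= !ratr_nat. Qed.

Lemma ratr_transfer (R : realFieldType) (V : finType) (e : rel V) (p q : nat)
  (w : V -> V -> rat) :
  perfect_weighted_fractional_matching e (p%:R / q%:R) (1 - p%:R / q%:R) w ->
  perfect_weighted_fractional_matching e (p%:R / q%:R : R) (1 - p%:R / q%:R)
     (fun u v => ratr (w u v)).
Proof.
case=> [[H0 H1] H2]; split; first split.
- by move=> u v euv; rewrite -(rmorph0 (@ratr R)) ler_rat H0.
- move=> u; have := H1 u; rewrite -(ler_rat R) rmorph1 => H.
  apply: le_trans H; rewrite rmorphD !rmorph_sum /=.
  rewrite le_eqVlt; apply/orP; left; apply/eqP; congr (_ + _).
    by apply: eq_bigr => v _; rewrite rmorphM /= ratr_pq.
  by apply: eq_bigr => v _; rewrite rmorphM rmorphB /= rmorph1 ratr_pq.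
- move: H2; rewrite /total_weight => H2.
  have := congr1 (@ratr R) H2; rewrite ratr_nat => <-.
  rewrite rmorph_sum; apply: eq_bigr => u _; rewrite rmorph_sum.
  apply: eq_bigr => v _; rewrite rmorphM rmorphD rmorphB /= rmorph1 ratr_pq.
  by [].
Qed.

Lemma relabel (R : realFieldType) (I V : finType) (phi : I -> V) (psi : V -> I)
  (K1 : cancel phi psi) (K2 : cancel psi phi) (e : rel V) (eta xi : R)
  (w : I -> I -> R) :
  perfect_weighted_fractional_matching (fun i j => e (phi i) (phi j)) eta xi w ->
  perfect_weighted_fractional_matching e eta xi (fun u v => w (psi u) (psi v)).
Proof.
have bij : bijective phi by exists psi.
case=> [[H0 H1] H2]; split; first split.
- move=> u v euv; apply: H0; by rewrite !K2.
- move=> u; have H := H1 (psi u); rewrite K2 in H.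
  rewrite (reindex phi (onW_bij _ bij)) [X in _ + X <= 1](reindex phi (onW_bij _ bij)) /=.
  apply: le_trans H; rewrite le_eqVlt; apply/orP; left; apply/eqP.
  by congr (_ + _); apply: eq_bigr => j _; rewrite K1.
- move: H2; rewrite /total_weight (bij_eq_card bij) => <-.
  rewrite (reindex phi (onW_bij _ bij)); apply: eq_bigr => i _.
  rewrite (reindex phi (onW_bij _ bij)) K1; apply: eq_bigr => j _; by rewrite K1.
Qed.

Lemma clear_den (V : finType) (e : rel V) (w : V -> V -> rat) :
  (forall u v, e u v -> 0 <= w u v) ->
  exists D : nat, (0 < D)%N /\ forall u v, e u v -> exists k : nat, w u v = k%:R / D%:R.
Proof.
move=> H0.
pose D := (\prod_(p : V * V) `|denq (w p.1 p.2)|%N)%N.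
have Dpos : (0 < D)%N.
  apply: prodn_gt0 => p; rewrite absz_gt0; exact: lt0r_neq0 (denq_gt0 _).
exists D; split => // u v euv.
set x := w u v.
pose d := `|denq x|%N.
have dD : (d %| D)%N by rewrite /D (bigD1 (u, v)) //= dvdn_mulr.
exists (`|numq x|%N * (D %/ d))%N.
have dpos : (0 < d)%N by rewrite absz_gt0; exact: lt0r_neq0 (denq_gt0 _).
rewrite natrM natr_div //; last by rewrite unitfE pnatr_eq0 -lt0n.
rewrite natr_absz ger0_norm ?numq_ge0 ?H0 //.
rewrite /d natr_absz gtr0_norm ?denq_gt0 //.
have hD : (D%:R : rat) != 0 by rewrite pnatr_eq0 -lt0n.
have hd : ((denq x)%:~R : rat) != 0 by rewrite intr_eq0 lt0r_neq0 ?denq_gt0.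
rewrite -{1}(divq_num_den x); field.
by rewrite hD hd.
Qed.

Definition goodD (p q n : nat) (E : {ffun 'I_n * 'I_n -> bool}) (D : nat) : Prop :=
  (0 < D)%N /\ exists w : 'I_n -> 'I_n -> rat,
    perfect_weighted_fractional_matching (fun i j => E (i, j))
       (p%:R / q%:R) (1 - p%:R / q%:R) w /\
    forall u v, E (u, v) -> exists k : nat, w u v = k%:R / D%:R.

Definition Dof (p q n : nat) (E : {ffun 'I_n * 'I_n -> bool}) : nat :=
  epsilon (inhabits 0%N) (goodD p q E).

Definition fbound (p q n : nat) : nat :=
  (\max_(E : {ffun 'I_n * 'I_n -> bool}) Dof p q E)%N.

Lemma perfect_ext (R : realFieldType) (V : finType) (e1 e2 : rel V) (eta xi : R) w :
  (forall u v, e1 u v = e2 u v) ->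
  perfect_weighted_fractional_matching e1 eta xi w ->
  perfect_weighted_fractional_matching e2 eta xi w.
Proof.
move=> He [[H0 H1] H2]; split; first split.
- by move=> u v; rewrite -He; apply: H0.
- move=> u; have := H1 u.
  have E1 : \sum_(v | e1 u v) eta * w u v = \sum_(v | e2 u v) eta * w u v.
    by apply: eq_bigl => v; rewrite He.
  have E2 : \sum_(v | e1 v u) xi * w v u = \sum_(v | e2 v u) xi * w v u.
    by apply: eq_bigl => v; rewrite He.
  by rewrite E1 E2.
- rewrite -H2 /total_weight; apply: eq_bigr => u _; apply: eq_bigl => v; by rewrite He.
Qed.

Theorem lemma2p10 :
  (forall (R : realType) (eta : R) (V : finType) (e : rel V),
     0 < eta -> irreflexive e ->
     (forall u : V, eta * (#|V|)%:R <= (indeg e u)%:R) ->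
     exists w : V -> V -> R,
       perfect_weighted_fractional_matching e eta (1 - eta) w) /\
  (exists f : nat -> nat -> nat -> nat,
     forall (R : realType) (p q : nat) (V : finType) (e : rel V),
       (0 < p)%N -> (0 < q)%N -> irreflexive e ->
       (forall u : V, (p%:R / q%:R : R) * (#|V|)%:R <= (indeg e u)%:R) ->
       exists (w : V -> V -> R) (D : nat),
         perfect_weighted_fractional_matching e (p%:R / q%:R) (1 - p%:R / q%:R) w
         /\ (0 < D)%N /\ (D <= f p q #|V|)%N
         /\ (forall u v, e u v -> exists k : nat, w u v = k%:R / D%:R)).
Proof.
split.
  move=> R eta V e eta0 _ Hdeg; exact: main.
exists fbound => R p q V e hp hq _ Hdeg.
pose phi := (@enum_val V predT).
pose psi := (@enum_rank V).
have K1 : cancel phi psi by apply: enum_valK.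
have K2 : cancel psi phi by apply: enum_rankK.
pose E := [ffun ij : 'I_#|V| * 'I_#|V| => e (phi ij.1) (phi ij.2)].
have HE : forall i j, E (i, j) = e (phi i) (phi j) by move=> i j; rewrite ffunE.
have Hind : forall i, indeg (fun i j => E (i, j)) i = indeg e (phi i).
  move=> i; rewrite /indeg.
  have -> : [set v | e v (phi i)] = phi @: [set j | E (j, i)].
    apply/setP => v; rewrite inE; apply/idP/imsetP => [h|[j]].
      by exists (psi v); [rewrite inE HE K2 | rewrite K2].
    by rewrite inE HE => h ->.
  by rewrite card_imset //; apply: can_inj K1.
have eta0 : (0 : rat) < p%:R / q%:R by rewrite divr_gt0 // ltr0n.
have Hdeg' : forall i, (p%:R / q%:R : rat) * (#|'I_#|V| |)%:R
                 <= (indeg (fun i j => E (i, j)) i)%:R.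
  move=> i; rewrite Hind card_ord -(ler_rat R) rmorphM /= ratr_pq !ratr_nat.
  exact: Hdeg.
have [w0 Hw0] := main eta0 Hdeg'.
have [D0 [D0pos HD0]] := clear_den (proj1 (proj1 Hw0)).
have good0 : goodD p q E D0 by split => //; exists w0.
have := epsilon_spec (inhabits 0%N) (goodD p q E) (ex_intro _ D0 good0).
rewrite -/(Dof p q E) => -[Dpos [w1 [Hw1 Hk1]]].
exists (fun u v => ratr (w1 (psi u) (psi v))), (Dof p q E); split; last split; last split.
- have Hw2 := @ratr_transfer R _ _ _ _ _ Hw1.
  have Hw3 := @perfect_ext R _ (fun i j => E (i, j)) (fun i j => e (phi i) (phi j)) _ _ _ HE Hw2.
  exact: (relabel K1 K2 Hw3).
- exact: Dpos.
- rewrite /fbound; exact: (@leq_bigmax _ (fun E0 : {ffun 'I_#|V| * 'I_#|V| -> bool} => Dof p q E0) E).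
move=> u v euv.
have : E (psi u, psi v) by rewrite HE !K2.
case/Hk1 => k ->; exists k.
by rewrite fmorph_div /= !ratr_nat.
Qed.
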